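(* In the setting below, assume $\|\nabla f_i(x)\|\le G_i$ for all $x$ and $i$, and run the method for all epochs $k\in\mathbb N$ with arbitrary permutations. Suppose (1) $\eta_k=r_k\tilde\eta_k$ for all $k\in\mathbb N$, where $r_k=r\vee\max_{\ell\in[k]}\|x_\ell-x_1\|$ for some $r>0$ and $(\tilde\eta_k)_{k\in\mathbb N}$ is a positive sequence; and (2) $\sum_{k=1}^\infty6\bar G^2n^2\tilde\eta_k^2\le c^2$ for some constant $0<c<1$. Then $$\|x_k-x_1\|\le\frac2{1-c}\|x_*-x_1\|+\frac c{1-c}r\quad\text{for all }k\in\mathbb N.$$
   Context: Setting. Let $n,d\in\mathbb N$, let $f_1,\dots,f_n:\mathbb R^d\to\mathbb R$ be convex, $f=\frac1n\sum_{i=1}^nf_i$, let $\psi:\mathbb R^d\to\mathbb R\cup\{+\infty\}$ be proper, closed and convex, and $F=f+\psi$. For a convex function $g$, $\nabla g(x)$ denotes an element of $\partial g(x)$ (for each $f_i$ a fixed selection of subgradients, the same one used in the algorithm). Assume there is $x_*\in\mathbb R^d$ with $F(x_* )=\inf_{x}F(x)\in\mathbb R$. Proximal shuffling gradient method: given $x_1\in\mathrm{dom}\,\psi$ and stepsizes $\eta_k>0$, for each epoch $k$: choose a permutation $\sigma_k=(\sigma_k^1,\dots,\sigma_k^n)$ of $[n]=\{1,\dots,n\}$; set $x_k^1=x_k$ and $x_k^{i+1}=x_k^i-\eta_k\nabla f_{\sigma_k^i}(x_k^i)$ for $i=1,\dots,n$; set $x_{k+1}=\arg\min_{x\in\mathbb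 R^d}\{n\psi(x)+\frac{1}{2\eta_k}\|x-x_k^{n+1}\|^2\}$. $a\vee b=\max\{a,b\}$. Lipschitz condition: constants $G_i>0$ with $\|\nabla f_i(x)\|\le G_i$ for all $x\in\mathbb R^d$, $i\in[n]$ (for every subgradient); $\bar G=\frac1n\sum_{i=1}^nG_i$. *)

(* Defs.v *)
From HB Require Import structures.
From mathcomp Require Import all_boot all_order all_algebra.
From mathcomp Require Import all_classical all_reals all_analysis.
From mathcomp Require Import perm.
Set Implicit Arguments. Unset Strict Implicit. Unset Printing Implicit Defensive.
Import Order.TTheory GRing.Theory Num.Theory.
Import numFieldNormedType.Exports.
Local Open Scope classical_set_scope.
Local Open Scope ring_scope.

Section Defs.
Variable R : realType.
Variable d : nat.
Notation vec := 'rV[R]_d.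

Definition dotv (u v : vec) : R := \sum_(i < d) u 0 i * v 0 i.
Definition enorm (v : vec) : R := Num.sqrt (dotv v v).

Definition convex_fun (h : vec -> R) : Prop :=
  forall (x y : vec) (t : R), 0 <= t <= 1 ->
    h (t *: x + (1 - t) *: y) <= t * h x + (1 - t) * h y.

Definition subgrad (h : vec -> R) (x g : vec) : Prop :=
  forall y : vec, h x + dotv g (y - x) <= h y.

Definition proper_fun (p : vec -> \bar R) : Prop :=
  (forall x, p x != -oo%E) /\ (exists x, (p x < +oo)%E).
Definition closed_fun (p : vec -> \bar R) : Prop :=
  forall t : R, closed [set x | (p x <= t%:E)%E].
Definition convex_efun (p : vec -> \bar R) : Prop :=
  forall (x y : vec) (t : R), 0 < t < 1 ->
    (p (t *: x + (1 - t) *: y)%R <= t%:E * p x + (1 - t)%R%:E * p y)%E.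

Fixpoint inner_pass (n : nat) (g : 'I_n -> vec -> vec) (eta : R)
    (s : seq 'I_n) (x : vec) : vec :=
  match s with
  | [::] => x
  | i :: s' => inner_pass g eta s' (x - eta *: g i x)
  end.

Definition prox_min (n : nat) (psi : vec -> \bar R) (eta : R) (v y : vec) : Prop :=
  forall z : vec,
    ((n%:R)%R%:E * psi y + (1 / (2 * eta) * enorm (y - v) ^+ 2)%R%:E
     <= (n%:R)%R%:E * psi z + (1 / (2 * eta) * enorm (z - v) ^+ 2)%R%:E)%E.

Definition rk (x : nat -> vec) (r : R) (k : nat) : R :=
  \big[Num.max/r]_(1 <= l < k.+1) enorm (x l - x 1%N).

Definition Fobj (n : nat) (f : 'I_n -> vec -> R) (psi : vec -> \bar R) (x : vec)
  : \bar R := ((n%:R)^-1 * \sum_(i < n) f i x)%R%:E + psi x.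

End Defs.

(* Main.v *)
Require Import Defs.
From HB Require Import structures.
From mathcomp Require Import all_boot all_order all_algebra.
From mathcomp Require Import all_classical all_reals all_analysis.
From mathcomp Require Import perm.
From mathcomp Require Import ring lra.
Import Order.TTheory GRing.Theory Num.Theory.
Local Open Scope ring_scope.

Module Helpers.
Set Implicit Arguments. Unset Strict Implicit. Unset Printing Implicit Defensive.

Section Vec.
Variables (R : realType) (d : nat).
Implicit Types u v w : 'rV[R]_d.

Lemma dotvC u v : dotv u v = dotv v u.
Proof. by apply: eq_bigr => i _; rewrite mulrC. Qed.

Lemma dotvDl u v w : dotv (u + v) w = dotv u w + dotv v w.
Proof. by rewrite /dotv -big_split; apply: eq_bigr => i _; rewrite mxE mulrDl. Qed.

Lemma dotvZl (t : R) u v : dotv (t *: u) v = t * dotv u v.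
Proof. by rewrite /dotv mulr_sumr; apply: eq_bigr => i _; rewrite mxE mulrA. Qed.

Lemma dotvNl u v : dotv (- u) v = - dotv u v.
Proof. by rewrite -scaleN1r dotvZl mulN1r. Qed.

Lemma dotvBl u v w : dotv (u - v) w = dotv u w - dotv v w.
Proof. by rewrite dotvDl dotvNl. Qed.

Lemma dotvDr u v w : dotv w (u + v) = dotv w u + dotv w v.
Proof. by rewrite dotvC dotvDl !(dotvC w). Qed.

Lemma dotvZr (t : R) u v : dotv v (t *: u) = t * dotv v u.
Proof. by rewrite dotvC dotvZl dotvC. Qed.

Lemma dotvNr u v : dotv v (- u) = - dotv v u.
Proof. by rewrite dotvC dotvNl dotvC. Qed.

Lemma dotvBr u v w : dotv w (u - v) = dotv w u - dotv w v.
Proof. by rewrite dotvDr dotvNr. Qed.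

Lemma dotv_ge0 u : 0 <= dotv u u.
Proof. by apply: sumr_ge0 => i _; rewrite -expr2 sqr_ge0. Qed.

Lemma enorm_ge0 u : 0 <= enorm u.
Proof. exact: sqrtr_ge0. Qed.

Lemma enorm_sqr u : enorm u ^+ 2 = dotv u u.
Proof. by rewrite /enorm sqr_sqrtr // dotv_ge0. Qed.

Lemma dotv0 u : dotv u u = 0 -> forall v, dotv u v = 0.
Proof.
move=> h v.
have h2 : forall i, u 0 i * u 0 i = 0.
  move=> i; apply: (psumr_eq0P _ h) => // j _; by rewrite -expr2 sqr_ge0.
rewrite /dotv big1 // => i _.
have /eqP := h2 i; rewrite mulf_eq0 orbb => /eqP ->; by rewrite mul0r.
Qed.

Lemma CS u v : dotv u v ^+ 2 <= dotv u u * dotv v v.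
Proof.
have [h0|hpos] := eqVneq (dotv u u) 0.
  by rewrite h0 (dotv0 h0) expr0n /= mul0r.
have hA : 0 < dotv u u by rewrite lt_def hpos dotv_ge0.
have := dotv_ge0 (dotv u v *: u - dotv u u *: v).
rewrite !(dotvBl, dotvBr, dotvZl, dotvZr) (dotvC v u) => h.
have : 0 <= dotv u u * (dotv u u * dotv v v - dotv u v ^+ 2) by lra.
rewrite pmulr_rge0 //; lra.
Qed.

Lemma CS_lo u v : - (enorm u * enorm v) <= dotv u v.
Proof.
have := CS u v; rewrite -!enorm_sqr -exprMn => h.
have hP : 0 <= enorm u * enorm v by apply: mulr_ge0; apply: enorm_ge0.
move: h hP; set P := enorm u * enorm v; set B := dotv u v => h hP; nra.
Qed.

Lemma CS_hi u v : dotv u v <= enorm u * enorm v.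
Proof.
have := CS u v; rewrite -!enorm_sqr -exprMn => h.
have hP : 0 <= enorm u * enorm v by apply: mulr_ge0; apply: enorm_ge0.
move: h hP; set P := enorm u * enorm v; set B := dotv u v => h hP; nra.
Qed.

Lemma dotvDD u v : dotv (u + v) (u + v) = dotv u u + 2 * dotv u v + dotv v v.
Proof. rewrite dotvDl !dotvDr (dotvC v u); ring. Qed.

Lemma enorm_triangle u v : enorm (u + v) <= enorm u + enorm v.
Proof.
have h : enorm (u + v) ^+ 2 <= (enorm u + enorm v) ^+ 2.
  rewrite enorm_sqr dotvDD sqrrD !enorm_sqr; have := CS_hi u v; lra.
have := enorm_ge0 (u + v); have := enorm_ge0 u; have := enorm_ge0 v; nra.
Qed.

Lemma dotvN u : dotv (- u) (- u) = dotv u u.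
Proof. by rewrite dotvNl dotvNr opprK. Qed.

Lemma enormN u : enorm (- u) = enorm u.
Proof. by rewrite /enorm dotvN. Qed.

Lemma enormB u v : enorm (u - v) = enorm (v - u).
Proof. by rewrite -enormN opprB. Qed.

Lemma dotvBB u v : dotv (u - v) (u - v) = dotv (v - u) (v - u).
Proof. by rewrite -dotvN opprB. Qed.

End Vec.

Section Inner.
Variables (R : realType) (n d : nat).
Variables (f : 'I_n -> 'rV[R]_d -> R) (g : 'I_n -> 'rV[R]_d -> 'rV[R]_d).
Variables (G : 'I_n -> R).
Hypothesis hg : forall i x, subgrad (f i) x (g i x).
Hypothesis hGpos : forall i, 0 < G i.
Hypothesis hGlip : forall i x v, subgrad (f i) x v -> enorm v <= G i.
Variable eta : R.
Hypothesis heta : 0 <= eta.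

Lemma disp s x : enorm (x - inner_pass g eta s x) <= eta * \sum_(i <- s) G i.
Proof.
elim: s x => [|i s IH] x /=.
  by rewrite big_nil subrr /enorm /dotv big1 ?sqrtr0 ?mulr0 // => j _; rewrite mxE mulr0.
rewrite big_cons.
have -> : x - inner_pass g eta s (x - eta *: g i x)
  = eta *: g i x + ((x - eta *: g i x) - inner_pass g eta s (x - eta *: g i x)).
  by rewrite addrA [eta *: _ + _]addrC subrK.
apply: (le_trans (enorm_triangle _ _)).
have h1 : enorm (eta *: g i x) <= eta * G i.
  rewrite /enorm dotvZl dotvZr mulrA -expr2 sqrtrM ?sqr_ge0 // sqrtr_sqr ger0_norm //.
  by apply: ler_wpM2l => //; apply: hGlip.
have := IH (x - eta *: g i x); lra.
Qed.

Lemma descent (y z : 'rV[R]_d) s x M :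
  eta * \sum_(i <- s) G i <= M ->
  dotv (inner_pass g eta s x - z) (inner_pass g eta s x - z)
    + 2 * eta * \sum_(i <- s) (f i y - f i z)
  <= dotv (x - z) (x - z) + eta ^+ 2 * \sum_(i <- s) G i ^+ 2
    + 2 * eta * \sum_(i <- s) G i * (enorm (inner_pass g eta s x - y) + M).
Proof.
elim: s x => [|i s IH] x /=.
  by rewrite !big_nil !mulr0 !addr0.
rewrite !big_cons => hM.
set x' := x - eta *: g i x.
set w := inner_pass g eta s x'.
have hGs : 0 <= \sum_(j <- s) G j by apply: sumr_ge0 => j _; apply/ltW.
have hM' : eta * \sum_(j <- s) G j <= M.
  apply: le_trans hM; apply: ler_wpM2l => //; have := hGpos i; lra.
have {IH} IH := IH x' hM'.
have hgx := hGlip (hg i x).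
have hgy := hGlip (hg i y).
have hN : dotv (x' - z) (x' - z)
   = dotv (x - z) (x - z) - 2 * eta * dotv (g i x) (x - z) + eta ^+ 2 * dotv (g i x) (g i x).
  rewrite /x' (_ : x - eta *: g i x - z = (x - z) + (- eta) *: g i x); last first.
    by rewrite scaleNr addrAC.
  rewrite dotvDD !dotvZl !dotvZr (dotvC (g i x)); ring.
have hsub1 := hg i x z.
have hsub2 := hg i y x.
have hd := disp (i :: s) x.
rewrite /= big_cons -/x' -/w in hd.
have hxy : enorm (x - y) <= enorm (x - w) + enorm (w - y).
  by rewrite (_ : x - y = (x - w) + (w - y)) ?enorm_triangle // addrA addrNK.
have hcs := CS_lo (g i y) (x - y).
have hgg : dotv (g i x) (g i x) <= G i ^+ 2.
  rewrite -enorm_sqr; have := enorm_ge0 (g i x); nra.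
have hGi := hGpos i.
have he := enorm_ge0 (g i y).
have hexy := enorm_ge0 (x - y).
have hp1 : enorm (g i y) * enorm (x - y) <= G i * (enorm (w - y) + M).
  apply: le_trans (_ : G i * enorm (x - y) <= _).
    by apply: ler_wpM2r.
  apply: ler_wpM2l; first lra.
  have : eta * (G i + \sum_(j <- s) G j) <= M by [].
  lra.
have e1 : eta * (dotv (g i x) (g i x)) <= eta * G i ^+ 2 by apply: ler_wpM2l.
have e2 : eta * (f i y - f i x) <= eta * (G i * (enorm (w - y) + M)).
  by apply: ler_wpM2l => //; move: hsub2 hcs hp1; rewrite /subgrad; lra.
have e3 : eta * (f i x - f i z) <= eta * dotv (g i x) (x - z).
  by apply: ler_wpM2l => //; move: hsub1; rewrite dotvBr dotvBr; lra.
rewrite mulrDr mulrDr mulrDr.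
move: IH hN e1 e2 e3; rewrite !expr2; nra.
Qed.

End Inner.

Lemma small_t (R : realType) (A B : R) : 0 <= B ->
  (forall t, 0 < t < 1 -> 0 <= A + t * B) -> 0 <= A.
Proof.
move=> hB h; rewrite leNgt; apply/negP => hA.
set u := - A.
have hu : 0 < u by rewrite /u; lra.
set t := u / (2 * (u + B)).
have hden : 0 < 2 * (u + B) by lra.
have ht0 : 0 < t by rewrite /t divr_gt0.
have ht1 : t * (2 * (u + B)) = u by rewrite /t mulfVK // gt_eqF.
have ht : t < 1 by nra.
have := h t; rewrite ht0 ht /= => /(_ isT) h1.
have e : 2 * (t * B) = u - 2 * (t * u) by move: ht1; lra.
have htu : 0 < t * u by apply: mulr_gt0.
have hA' : A = - u by rewrite /u opprK.
lra.
Qed.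

Lemma efin_ex (R : realType) (p : \bar R) : p != -oo%E -> (p < +oo)%E -> exists q, p = q%:E.
Proof. by case: p => [q| |] //; exists q. Qed.

Section Prox.
Variables (R : realType) (n d : nat).
Variable psi : 'rV[R]_d -> \bar R.
Hypothesis hn : (0 < n)%N.
Hypothesis hnotm : forall x, psi x != -oo%E.
Hypothesis hconv : convex_efun psi.
Variables (eta : R) (v y : 'rV[R]_d).
Hypothesis heta : 0 < eta.
Hypothesis hprox : prox_min n psi eta v y.

Lemma prox_fin z pz : psi z = pz%:E -> exists py, psi y = py%:E.
Proof.
move=> hz; apply: efin_ex; first exact: hnotm.
rewrite ltey; apply/eqP => E.
have := hprox z; rewrite E hz.
have hn' : (0 < n%:R :> R) by rewrite ltr0n.
by rewrite mulry gtr0_sg // mul1e addye // -EFinM -EFinD leye_eq.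
Qed.

Lemma prox3 z py pz : psi y = py%:E -> psi z = pz%:E ->
  dotv (z - y) (z - y) + dotv (y - v) (y - v) + 2 * eta * n%:R * py
  <= dotv (z - v) (z - v) + 2 * eta * n%:R * pz.
Proof.
move=> hy hz.
set nn : R := n%:R.
have hnn : 0 < nn by rewrite ltr0n.
set ie : R := 1 / (2 * eta).

have h2e : 0 < 2 * eta by apply: mulr_gt0.
have hie : ie * (2 * eta) = 1 by rewrite /ie mul1r mulVf // lt0r_neq0.
have hie0 : 0 < ie by rewrite /ie divr_gt0.
set D := dotv (y - v) (z - y).
set Q := dotv (z - y) (z - y).
set N1 := dotv (y - v) (y - v).
have hQ : 0 <= Q by apply: dotv_ge0.
have key : 0 <= nn * (pz - py) + 2 * ie * D.
  apply: (@small_t _ _ (ie * Q)); first by apply: mulr_ge0 => //; apply: ltW.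
  move=> t /andP [t0 t1].
  set zt := t *: z + (1 - t) *: y.
  have hcz := hconv z y (t:=t); rewrite t0 t1 /= in hcz.
  have := hcz isT; rewrite hz hy -!EFinM -EFinD => hczt.
  have [q hq] : exists q, psi zt = q%:E.
    apply: efin_ex; first exact: hnotm.
    by apply: (le_lt_trans hczt); rewrite ltry.
  rewrite hq lee_fin in hczt.
  have hv : zt - v = (y - v) + t *: (z - y).
    apply/rowP => i; rewrite !mxE. rewrite mulrBl mulrBr mul1r; lra.
  have hN : dotv (zt - v) (zt - v) = N1 + 2 * t * D + t ^+ 2 * Q.
    by rewrite hv dotvDD !dotvZr !dotvZl -/D -/Q -/N1; ring.
  have := hprox zt; rewrite hy hq -!EFinM -!EFinD lee_fin !enorm_sqr hN -/N1 -/ie -/nn.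
  move=> h.
  have hq2 : nn * q <= nn * (t * pz + (1 - t) * py) by apply: ler_wpM2l => //; apply: ltW.
  have : 0 <= t * (nn * (pz - py) + 2 * ie * D + t * (ie * Q)) by nra.
  by rewrite pmulr_rge0.
have hzv : z - v = (z - y) + (y - v) by rewrite addrA subrK.
rewrite hzv dotvDD (dotvC (z - y)) -/D -/Q -/N1.
have : 0 <= (2 * eta) * (nn * (pz - py) + 2 * ie * D) by apply: mulr_ge0 => //; lra.
have e : 2 * eta * (2 * ie * D) = 2 * D.
  have -> : 2 * eta * (2 * ie * D) = (ie * (2 * eta)) * (2 * D) by ring.
  by rewrite hie mul1r.
move: e; nra.
Qed.

End Prox.

Lemma perm_sum (R : realType) n (s : {perm 'I_n}) (F : 'I_n -> R) :
  \sum_(i <- [seq s j | j <- enum 'I_n]) F i = \sum_i F i.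
Proof.
by rewrite big_map big_enum /= [RHS](reindex_inj (@perm_inj _ s)); apply: eq_bigl.
Qed.

Lemma bigmax_rcons (R : realType) (r : R) (F : nat -> R) s a :
  \big[Num.max/r]_(i <- rcons s a) F i = Num.max (\big[Num.max/r]_(i <- s) F i) (F a).
Proof.
elim: s => [|b s IH]; first by rewrite /= !big_cons !big_nil maxC.
by rewrite rcons_cons !big_cons IH maxA.
Qed.

Lemma bigmax_nat (R : realType) (r : R) (F : nat -> R) k :
  \big[Num.max/r]_(1 <= l < k.+2) F l = Num.max (\big[Num.max/r]_(1 <= l < k.+1) F l) (F k.+1).
Proof.
rewrite /index_iota !subSS !subn0.
have -> : iota 1 k.+1 = rcons (iota 1 k) k.+1.
  by rewrite -cats1 -(addn1 k) iotaD add1n addn1.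
exact: bigmax_rcons.
Qed.

Lemma sumsq_le (R : realType) (I : Type) (s : seq I) (G : I -> R) :
  (forall i, 0 <= G i) -> \sum_(i <- s) G i ^+ 2 <= (\sum_(i <- s) G i) ^+ 2.
Proof.
move=> hG; elim: s => [|i s IH]; first by rewrite !big_nil expr0n.
rewrite !big_cons.
have h1 : 0 <= \sum_(j <- s) G j by apply: sumr_ge0.
have := hG i; nra.
Qed.

Lemma young (R : realType) (a b : R) : 2 * a * b <= a ^+ 2 + b ^+ 2.
Proof. have := sqr_ge0 (a - b); nra. Qed.

Lemma epoch_arith (R : realType) (Nv Nx Ny N1 Sf Sz G2 S eta e nn py pz : R) :
  Nv + 2 * eta * (Sf - Sz) <= Nx + eta ^+ 2 * G2 + 2 * eta * (S * (e + eta * S)) ->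
  Ny + N1 + 2 * eta * nn * py <= Nv + 2 * eta * nn * pz ->
  2 * eta * (nn * pz - nn * py) <= 2 * eta * (Sf - Sz) ->
  e ^+ 2 = N1 ->
  eta ^+ 2 * G2 <= eta ^+ 2 * S ^+ 2 ->
  Ny <= Nx + 4 * eta ^+ 2 * S ^+ 2.
Proof. have := young (eta * S) e; rewrite exprMn; nra. Qed.

Lemma arith_a (R : realType) (p q s : R) : 4 * (p * q) ^+ 2 * s ^+ 2 <= 6 * s ^+ 2 * q ^+ 2 * p ^+ 2.
Proof. have := sqr_ge0 (p * q * s); rewrite !exprMn; nra. Qed.

Lemma arith_step (R : realType) (N2 N1 E A R0 R1 D2 T1 : R) :
  N2 <= N1 + E -> E <= A * R1 ^+ 2 -> N1 <= D2 + R0 ^+ 2 * T1 ->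
  0 <= R0 -> R0 <= R1 -> 0 <= T1 -> N2 <= D2 + R1 ^+ 2 * (T1 + A).
Proof.
move=> h1 h2 h3 h4 h5 h6.
have h7 : R0 ^+ 2 <= R1 ^+ 2 by rewrite ler_sqr // ?nnegrE //; apply: le_trans h5.
have h8 : R0 ^+ 2 * T1 <= R1 ^+ 2 * T1 by apply: ler_wpM2r.
nra.
Qed.

Lemma arith_bd (R : realType) (e D c Rk T N : R) :
  e ^+ 2 = N -> N <= D ^+ 2 + Rk ^+ 2 * T -> T <= c ^+ 2 ->
  0 <= e -> 0 <= D -> 0 <= c -> 0 <= Rk -> e <= D + c * Rk.
Proof.
move=> h1 h2 h3 h4 h5 h6 h7.
have h8 : Rk ^+ 2 * T <= Rk ^+ 2 * c ^+ 2 by apply: ler_wpM2l => //; apply: sqr_ge0.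
have h9 : e ^+ 2 <= (D + c * Rk) ^+ 2.
  rewrite h1; apply: (le_trans h2); rewrite sqrrD exprMn.
  have : 0 <= 2 * D * (c * Rk) by apply: mulr_ge0 => //; apply: mulr_ge0 => //; apply: mulr_ge0.
  nra.
rewrite -ler_sqr // ?nnegrE //; apply: addr_ge0 => //; exact: mulr_ge0.
Qed.

Lemma arith_max (R : realType) (D c r : R) : 0 <= D -> 0 < c -> c < 1 -> 0 < r ->
  2 * D + c * Num.max r (2 / (1 - c) * D + c / (1 - c) * r)
    <= 2 / (1 - c) * D + c / (1 - c) * r.
Proof.
move=> hD hc0 hc1 hr.
set B := 2 / (1 - c) * D + c / (1 - c) * r.
have hB : B * (1 - c) = 2 * D + c * r.
  have hc : 1 - c != 0 by rewrite lt0r_neq0 // subr_gt0.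
  by rewrite /B; field.
have hB0 : 0 <= B.
  rewrite /B; apply: addr_ge0; apply: mulr_ge0 => //; try (apply: divr_ge0; lra); lra.
have [h|h] := leP r B.
  have : 0 < c * r by apply: mulr_gt0.
  nra.
have : 0 <= c * B by apply: mulr_ge0 => //; exact: ltW.
nra.
Qed.

End Helpers.
Import Helpers.


Theorem mainTheorem12 (R : realType) (n d : nat) (hn : (0 < n)%N)
  (f : 'I_n -> 'rV[R]_d -> R) (hf : forall i, convex_fun (f i))
  (psi : 'rV[R]_d -> \bar R)
  (hpsi_p : proper_fun psi) (hpsi_c : closed_fun psi) (hpsi_v : convex_efun psi)
  (g : 'I_n -> 'rV[R]_d -> 'rV[R]_d)
  (hg : forall i x, subgrad (f i) x (g i x))
  (G : 'I_n -> R) (hGpos : forall i, 0 < G i)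
  (hGlip : forall i x v, subgrad (f i) x v -> enorm v <= G i)
  (xstar : 'rV[R]_d) (hstar_fin : (psi xstar < +oo)%E)
  (hstar : forall x, (Fobj f psi xstar <= Fobj f psi x)%E)
  (x : nat -> 'rV[R]_d) (hx1 : (psi (x 1%N) < +oo)%E)
  (sigma : nat -> {perm 'I_n}) (eta : nat -> R)
  (hstep : forall k, (0 < k)%N ->
     prox_min n psi (eta k)
       (inner_pass g (eta k) [seq sigma k j | j <- enum 'I_n] (x k)) (x k.+1))
  (r : R) (hr : 0 < r) (etat : nat -> R)
  (hetat : forall k, (0 < k)%N -> 0 < etat k)
  (heta : forall k, (0 < k)%N -> eta k = rk x r k * etat k)
  (c : R) (hc0 : 0 < c) (hc1 : c < 1)
  (hsum : (\sum_(1 <= k <oo)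
            ((6 * ((\sum_(i < n) G i) / n%:R) ^+ 2 * (n%:R) ^+ 2 * etat k ^+ 2)%:E)
           <= (c ^+ 2)%:E)%E) :
  forall k, (0 < k)%N ->
    enorm (x k - x 1%N) <= 2 / (1 - c) * enorm (xstar - x 1%N) + c / (1 - c) * r.
Proof.
have hnotm : forall z, psi z != -oo%E by case: hpsi_p.
set S := \sum_(i < n) G i.
set nn : R := n%:R.
have hnn : 0 < nn by rewrite ltr0n.
have hS : 0 <= S by apply: sumr_ge0 => i _; apply: ltW.
have rk0 : rk x r 0 = r by rewrite /rk big_geq.
have rkS : forall k, rk x r k.+1 = Num.max (rk x r k) (enorm (x k.+1 - x 1%N)).
  by move=> k; rewrite /rk bigmax_nat.
have rk_ge : forall k, r <= rk x r k.
  elim=> [|k IH]; first by rewrite rk0.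
  by rewrite rkS le_max IH.
have rk_mono : forall k, rk x r k <= rk x r k.+1 by move=> k; rewrite rkS le_max lexx.
have [pz hpz] : exists p, psi xstar = p%:E by apply: efin_ex.
have hfin : forall k, (0 < k)%N -> exists p, psi (x k) = p%:E.
  case=> [//|[|k]] _; first by apply: efin_ex.
  exact: (prox_fin hn hnotm (hstep k.+1 isT) hpz).
have epoch : forall k, (0 < k)%N ->
    dotv (x k.+1 - xstar) (x k.+1 - xstar)
    <= dotv (x k - xstar) (x k - xstar) + 4 * eta k ^+ 2 * S ^+ 2.
  move=> k hk.
  have hek : 0 < eta k by rewrite heta // mulr_gt0 // ?hetat //; apply: lt_le_trans (rk_ge k).
  set s := [seq sigma k j | j <- enum 'I_n].
  set v := inner_pass g (eta k) s (x k).
  set y := x k.+1.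
  have E1 := descent hg hGpos hGlip (ltW hek) y xstar (x k) (s := s) (M := eta k * S).
  rewrite !perm_sum -/S -/v in E1.
  have {E1} E1 := E1 (lexx _).
  have hsq : \sum_(i < n) G i ^+ 2 <= S ^+ 2.
    exact: (sumsq_le _ (fun i => ltW (hGpos i))).
  rewrite sumrB -mulr_suml -/S in E1.
  have [py hpy] := hfin k.+1 isT.
  have E2 := prox3 hn hnotm hpsi_v hek (hstep k hk) hpy hpz.
  have E3 := hstar y.
  rewrite /Fobj hpz hpy -!EFinD lee_fin in E3.
  have E3' : \sum_i f i xstar + nn * pz <= \sum_i f i y + nn * py.
    have := ler_wpM2l (ltW hnn) E3.
    by rewrite !mulrDr !mulrA mulfV ?lt0r_neq0 // !mul1r.
  have E3'' : 2 * eta k * (nn * pz - nn * py) <= 2 * eta k * (\sum_i f i y - \sum_i f i xstar).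
    by apply: ler_wpM2l; [lra | lra].
  rewrite -/v -/y in E2.
  rewrite (dotvBB xstar y) (dotvBB xstar v) (dotvBB y v) in E2.
  have he : enorm (v - y) ^+ 2 = dotv (v - y) (v - y) by rewrite enorm_sqr.
  have hsq2 : eta k ^+ 2 * \sum_(i < n) G i ^+ 2 <= eta k ^+ 2 * S ^+ 2.
    by apply: ler_wpM2l => //; apply: sqr_ge0.
  exact: (epoch_arith E1 E2 E3'' he hsq2).
pose a := fun l => 6 * ((\sum_(i < n) G i) / n%:R) ^+ 2 * (n%:R) ^+ 2 * etat l ^+ 2.
pose T := fun m => \sum_(1 <= l < m) a l.
have ha0 : forall l, 0 <= a l.
  move=> l; rewrite /a; apply: mulr_ge0; last exact: sqr_ge0.
  apply: mulr_ge0; last exact: sqr_ge0.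
  apply: mulr_ge0; last exact: sqr_ge0.
  by [].
have hT0 : forall m, 0 <= T m by move=> m; apply: sumr_ge0 => l _.
have hT : forall m, T m <= c ^+ 2.
  move=> m; rewrite -lee_fin; apply: le_trans hsum.
  rewrite /T -sumEFin.
  apply: (le_trans _ (nneseries_lim_ge (P := xpredT) m _)) => //.
  by move=> l _ _; rewrite lee_fin; apply: ha0.
have hT1 : T 1%N = 0 by rewrite /T big_geq.
have hTS : forall k, T k.+2 = T k.+1 + a k.+1.
  by move=> k; rewrite /T big_nat_recr.
have haeta : forall l, (0 < l)%N -> 4 * eta l ^+ 2 * S ^+ 2 <= a l * rk x r l ^+ 2.
  move=> l hl; rewrite heta //.
  have -> : a l = 6 * S ^+ 2 * etat l ^+ 2 * 1.
    rewrite /a -/S; field; rewrite pnatr_eq0 -lt0n; exact: hn.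
  rewrite mulr1; exact: arith_a.
have hrk0 : forall k, 0 <= rk x r k by move=> k; apply: le_trans (rk_ge k); exact: ltW.
have Q : forall k, dotv (x k.+1 - xstar) (x k.+1 - xstar)
           <= dotv (x 1%N - xstar) (x 1%N - xstar) + rk x r k ^+ 2 * T k.+1.
  elim=> [|k IH]; first by rewrite hT1 mulr0 addr0.
  rewrite hTS.
  exact: (arith_step (epoch k.+1 isT) (haeta k.+1 isT) IH (hrk0 k) (rk_mono k) (hT0 _)).
set D := enorm (xstar - x 1%N).
have hD : 0 <= D by apply: enorm_ge0.
have bd : forall k, enorm (x k.+1 - x 1%N) <= 2 * D + c * rk x r k.
  move=> k.
  have hD2 : dotv (x 1%N - xstar) (x 1%N - xstar) = D ^+ 2 by rewrite /D enormB enorm_sqr.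
  have Qk := Q k; rewrite hD2 in Qk.
  have h1 := arith_bd (enorm_sqr _) Qk (hT _) (enorm_ge0 _) hD (ltW hc0) (hrk0 k).
  have h2 : x k.+1 - x 1%N = (x k.+1 - xstar) + (xstar - x 1%N) by rewrite addrA subrK.
  rewrite h2; apply: (le_trans (enorm_triangle _ _)).
  rewrite -/D; move: h1; set u := enorm _; move=> h1.
  have : u + D <= D + c * rk x r k + D by apply: lerD.
  have -> : D + c * rk x r k + D = 2 * D + c * rk x r k by ring.
  by [].
have Pk : forall k, rk x r k <= Num.max r (2 / (1 - c) * D + c / (1 - c) * r).
  elim=> [|k IH]; first by rewrite rk0 le_max lexx.
  rewrite rkS ge_max IH /=.
  rewrite le_max; apply/orP; right; apply: (le_trans (bd k)).
  apply: le_trans (arith_max hD hc0 hc1 hr).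
  by apply: lerD => //; apply: ler_wpM2l => //; exact: ltW.
case=> [//|k] _.
apply: (le_trans (bd k)); apply: le_trans (arith_max hD hc0 hc1 hr).
by apply: lerD => //; apply: ler_wpM2l => //; exact: ltW.
Qed.
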